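(* Let $G$ be a profinite group and let $\psi$ be an expansion map for $G$ with support $A$ and pointer $\chi_0$. Then for all $\sigma_1,\dots,\sigma_{\#A}\in G$, $$\phi_{A\setminus\{\chi_0\}}(\psi)\big([\sigma_1,[\sigma_2,[\dots,[\sigma_{\#A-1},\sigma_{\#A}]\dots]]]\big)=\sum_{f}\prod_{s=1}^{\#A}f(s)(\sigma_s),$$ where the sum runs over all bijections $f:\{1,\dots,\#A\}\to A$ with $f(\#A-1)=\chi_0$ or $f(\#A)=\chi_0$.
   Context: Let $A$ be a finite $\mathbb{F}_2$-linearly independent set of continuous homomorphisms $G\to\mathbb{F}_2$ with $\#A\geq2$, and $\chi_0\in A$. Let $W=\mathbb{F}_2^{A\setminus\{\chi_0\}}$ with basis $(e_\chi)_{\chi\in A\setminus\{\chi_0\}}$, and let $W$ act on the group algebra $\mathbb{F}_2[W]$ by multiplication by group elements, forming $\mathbb{F}_2[W]\rtimes W$. An expansion map for $G$ with support $A$ and pointer $\chi_0$ is a continuous homomorphism $\psi:G\to\mathbb{F}_2[W]\rtimes W$ such that for each $\chi\in A\setminus\{\chi_0\}$ the $\chi$-coordinate of the $W$-component of $\psi$ equals $\chi$, and $\varepsilon\circ(\text{first component of }\psi)=\chi_0$, where $\varepsilon$ is the augmentation of $\mathbb{F}_2[W]$ (this composite is the unique nontrivial character of $\mathbb{F}_2[W]\rtimes W$ trivial on $\{0\}\rtimes W$). Writing $t_\chi=1+[e_\chi]\in\mathbb{F}_2[W]$ and $t_B=\prod_{\chi\in B}t_\chi$ for $B\subseteq A\setminus\{\chi_0\}$,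 the $t_B$ form a basis of $\mathbb{F}_2[W]$, and $\phi_B(\psi):G\to\mathbb{F}_2$ denotes the coefficient of $t_B$ in the first component of $\psi$. Commutators are $[a,b]=aba^{-1}b^{-1}$. *)

(* Defs.v *)
From HB Require Import structures.
From mathcomp Require Import all_boot all_order fingroup perm all_algebra.
From mathcomp Require Import classical_sets topology.
Set Implicit Arguments. Unset Strict Implicit. Unset Printing Implicit Defensive.
Import GRing.Theory.
Local Open Scope classical_set_scope.
Local Open Scope ring_scope.

Definition is_profinite_group (G : topologicalType) (mul : G -> G -> G)
    (one : G) (inv : G -> G) : Prop :=
  [/\ (forall x y z, mul x (mul y z) = mul (mul x y) z),
      (forall x, mul one x = x) &
      (forall x, mul (inv x) x = one)] /\
  [/\ continuous (fun p : G * G => mul p.1 p.2),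
      continuous inv,
      compact [set: G],
      hausdorff_space G &
      totally_disconnected [set: G]].

Definition gcomm (G : Type) (mul : G -> G -> G) (inv : G -> G) (a b : G) : G :=
  mul (mul (mul a b) (inv a)) (inv b).

Fixpoint ncomm (G : Type) (mul : G -> G -> G) (inv : G -> G) (one : G)
    (s : seq G) : G :=
  match s with
  | [::] => one
  | [:: x] => x
  | x :: s' => gcomm mul inv x (ncomm mul inv one s')
  end.

(* continuous map into a finite discrete space: all fibres are open *)
Definition cont_to_discrete (G : topologicalType) (T : Type) (f : G -> T) :=
  forall y : T, open (f @^-1` [set y]).

Definition cont_hom_F2 (G : topologicalType) (mul : G -> G -> G)
    (chi : G -> 'F_2) : Prop :=
  (forall x y, chi (mul x y) = chi x + chi y) /\ cont_to_discrete chi.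

Definition F2_lin_indep (G : Type) (n : nat) (chi : 'I_n -> G -> 'F_2) :=
  forall c : 'I_n -> 'F_2,
    (forall x, \sum_(i < n) c i * chi i x = 0) -> forall i, c i = 0.

(* The family A is indexed by 'I_n; the pointer is i0.  A \ {chi_0} is
   indexed by Jidx i0. *)
Definition Jidx (n : nat) (i0 : 'I_n) := {j : 'I_n | j != i0}.

Definition Wsp (n : nat) (i0 : 'I_n) := {ffun Jidx i0 -> 'F_2}.

(* group algebra F_2[W], elements = functions W -> F_2 *)
Definition GA (n : nat) (i0 : 'I_n) := {ffun Wsp i0 -> 'F_2}.

Section GroupAlgebra.
Variables (n : nat) (i0 : 'I_n).

Definition evec (j : Jidx i0) : Wsp i0 := [ffun k => (k == j)%:R].

Definition gdelta (w : Wsp i0) : GA i0 := [ffun v : Wsp i0 => (v == w)%:R].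

Definition gmul (a b : GA i0) : GA i0 :=
  [ffun v : Wsp i0 => \sum_(u : Wsp i0) a u * b (v - u)].

Definition aug (a : GA i0) : 'F_2 := \sum_(w : Wsp i0) a w.

(* multiplication in the semidirect product F_2[W] x| W, W acting on
   F_2[W] by multiplication by group elements *)
Definition sdmul (p q : GA i0 * Wsp i0) : GA i0 * Wsp i0 :=
  (p.1 + gmul (gdelta p.2) q.1, p.2 + q.2).

Definition tvec (j : Jidx i0) : GA i0 := gdelta 0 + gdelta (evec j).
Definition tB (B : {set Jidx i0}) : GA i0 :=
  \big[gmul/gdelta 0]_(j in B) tvec j.

(* coefficient of t_B in a, w.r.t. the basis (t_B)_B: the value at B of
   the (unique) coefficient family c with a = sum_B c_B t_B *)
Definition tcoef (a : GA i0) (B : {set Jidx i0}) : 'F_2 :=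
  match [pick c : {ffun {set Jidx i0} -> 'F_2} |
           a == \sum_(C : {set Jidx i0}) [ffun w => c C * tB C w]] with
  | Some c => c B
  | None => 0
  end.

End GroupAlgebra.

Definition expansion_map (G : topologicalType) (mul : G -> G -> G)
    (n : nat) (chi : 'I_n -> G -> 'F_2) (i0 : 'I_n)
    (psi : G -> GA i0 * Wsp i0) : Prop :=
  [/\ (forall x y, psi (mul x y) = sdmul (psi x) (psi y)),
      cont_to_discrete psi,
      (forall (j : Jidx i0) x, (psi x).2 j = chi (val j) x) &
      (forall x, aug (psi x).1 = chi i0 x)].

Definition phiB (G : Type) (n : nat) (i0 : 'I_n)
    (psi : G -> GA i0 * Wsp i0) (B : {set Jidx i0}) (x : G) : 'F_2 :=
  tcoef (psi x).1 B.

(* Main.v *)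
Require Import Defs.
From HB Require Import structures.
From mathcomp Require Import all_boot all_order fingroup perm all_algebra.
From mathcomp Require Import zify ring.
Set Implicit Arguments. Unset Strict Implicit. Unset Printing Implicit Defensive.
Import GRing.Theory.
Local Open Scope ring_scope.

Lemma F2cases (a : 'F_2) : a = 0 \/ a = 1.
Proof. by case: a => [[|[|]]] //= ?; [left|right]; apply/val_inj. Qed.

Lemma F2add (a : 'F_2) : a + a = 0.
Proof. by case: (F2cases a) => ->; apply/val_inj. Qed.

Lemma F2opp (a : 'F_2) : - a = a.
Proof. by rewrite -[LHS]add0r -(F2add a) addrK. Qed.

Lemma F2eq (a b : 'F_2) : (a == b)%:R = 1 + a + b.
Proof. by case: (F2cases a) => ->; case: (F2cases b) => ->; apply/val_inj. Qed.

Lemma F2neq0 (a : 'F_2) : (a != 0)%:R = a.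
Proof. by case: (F2cases a) => ->; apply/val_inj. Qed.

Lemma ffadd (T : finType) (f : {ffun T -> 'F_2}) : f + f = 0.
Proof. by apply/ffunP => x; rewrite !ffunE F2add. Qed.

Lemma ffopp (T : finType) (f : {ffun T -> 'F_2}) : - f = f.
Proof. by apply/ffunP => x; rewrite !ffunE F2opp. Qed.

Lemma ffK (T : finType) (f g : {ffun T -> 'F_2}) : f + g + g = f.
Proof. by rewrite -addrA ffadd addr0. Qed.

Lemma prod_bool (T : finType) (P : pred T) :
  \prod_(j : T) ((P j)%:R : 'F_2) = [forall j, P j]%:R.
Proof.
case: (boolP [forall j, P j]) => [/forallP H | ].
  by apply: big1 => j _; rewrite H.
rewrite negb_forall => /existsP [j Hj].
by rewrite (bigD1 j) //= (negbTE Hj) mul0r.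
Qed.

Lemma big_opt (T : finType) (F : option T -> 'F_2) :
  \sum_(o : option T) F o = F None + \sum_(s : T) F (Some s).
Proof.
rewrite (bigD1 None) //=; congr (_ + _).
rewrite (reindex_omap Some (fun x => x)) //=; last by case.
by apply: eq_bigl => s; rewrite eqxx.
Qed.

Lemma sum_delta (T : finType) (w : T) (F : T -> 'F_2) :
  \sum_(u : T) (u == w)%:R * F u = F w.
Proof.
rewrite (bigD1 w) //= eqxx mul1r big1 ?addr0 // => u /negbTE ->.
by rewrite mul0r.
Qed.

Lemma sum_powU1 (I : finType) (F : {set I} -> 'F_2) (q : I) (P : {set I}) :
  q \notin P ->
  \sum_(S : {set I} | S \subset q |: P) F S =
  \sum_(S : {set I} | S \subset P) F S + \sum_(S : {set I} | S \subset P) F (q |: S).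
Proof.
move=> qP.
rewrite (bigID (fun S : {set I} => q \in S)) /= addrC; congr (_ + _).
  apply: eq_bigl => S; apply/idP/idP.
    move=> /andP [SqP qS]; apply/subsetP => x xS.
    have := subsetP SqP x xS; rewrite in_setU1 => /orP [/eqP xq|//].
    by rewrite -xq xS in qS.
  move=> SP; rewrite (subset_trans SP (subsetU1 _ _)) /=.
  by apply/negP => /(subsetP SP); rewrite (negbTE qP).
rewrite (reindex_onto (fun S => q |: S) (fun S => S :\ q)) /=; last first.
  by move=> S /andP [_ qS]; rewrite setD1K.
apply: eq_bigl => S; rewrite setU11 andbT.
apply/idP/idP.
  move=> /andP [H /eqP E]; apply/subsetP => x xS.
  have qS : q \notin S by rewrite -E setD11.
  have xq : x != q by apply/negP => /eqP xq; rewrite -xq xS in qS.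
  have := subsetP H x (setU1r _ xS); rewrite in_setU1 (negbTE xq) //.
move=> SP; have qS : q \notin S by apply/negP => /(subsetP SP); rewrite (negbTE qP).
by rewrite setU1K // eqxx andbT setUS.
Qed.

Lemma parity (I : finType) (T U : {set I}) :
  \sum_(S : {set I} | S \subset U) ((T \subset S)%:R : 'F_2) = (T == U)%:R.
Proof.
case: (boolP (T \subset U)) => TU; last first.
  rewrite big1; last first.
    by move=> S SU; case: (boolP (T \subset S)) => // TS; rewrite (subset_trans TS SU) in TU.
  by case: eqP => // E; rewrite E subxx in TU.
case: (eqVneq T U) => [<-|neTU].
  rewrite (bigD1 T) //= subxx big1 ?addr0 // => S /andP [ST neST].
  case: (boolP (T \subset S)) => // TS.
  by move: neST; rewrite eqEsubset ST TS.
have [q qU qT] : exists2 q, q \in U & q \notin T.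
  apply/exists_inP; move: neTU; rewrite eqEsubset TU /= => /subsetPn [q qU qT].
  by apply/exists_inP; exists q.
have qU' : q \notin U :\ q by rewrite setD11.
rewrite -{1}(setD1K qU) sum_powU1 //.
have -> : \sum_(S : {set I} | S \subset U :\ q) ((T \subset q |: S)%:R : 'F_2) =
          \sum_(S : {set I} | S \subset U :\ q) ((T \subset S)%:R : 'F_2).
  apply: eq_bigr => S _; suff -> : (T \subset q |: S) = (T \subset S) by [].
  apply/idP/idP => H; last exact: (subset_trans H (subsetU1 _ _)).
  apply/subsetP => x xT; have := subsetP H x xT; rewrite in_setU1 => /orP [/eqP xq|//].
  by rewrite -xq xT in qT.
by rewrite F2add.
Qed.

Lemma natb_eq (b c : bool) : b = c -> (b%:R : 'F_2) = c%:R.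
Proof. by move=> ->. Qed.

Lemma gmul_delta n (i0 : 'I_n) (w : Wsp i0) (b : GA i0) :
  gmul (gdelta w) b = [ffun v : Wsp i0 => b (v - w)].
Proof.
apply/ffunP => v; rewrite !ffunE.
rewrite (eq_bigr (fun u => (u == w)%:R * b (v - u))); last by move=> u _; rewrite ffunE.
by rewrite sum_delta.
Qed.

Lemma gmul_tvec n (i0 : 'I_n) (j : Jidx i0) (b : GA i0) :
  gmul (tvec j) b = [ffun v : Wsp i0 => b v + b (v - evec j)].
Proof.
apply/ffunP => v; rewrite !ffunE.
rewrite (eq_bigr (fun u => (u == 0)%:R * b (v - u) + (u == evec j)%:R * b (v - u))).
  by rewrite big_split /= !sum_delta subr0.
by move=> u _; rewrite /tvec !ffunE mulrDl.
Qed.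

Lemma tB_seq n (i0 : 'I_n) (s : seq (Jidx i0)) (v : Wsp i0) : uniq s ->
  (\big[@gmul _ i0/gdelta 0]_(j <- s) tvec j) v =
  [forall j, (j \notin s) ==> (v j == 0)]%:R.
Proof.
elim: s v => [|j s IH] v /=.
  move=> _; rewrite big_nil ffunE; apply: natb_eq; apply/idP/forallP => [/eqP -> k|H].
    by rewrite ffunE eqxx.
  by apply/eqP/ffunP => k; rewrite ffunE; apply/eqP; exact: (H k).
move=> /andP [js us]; rewrite big_cons gmul_tvec ffunE !IH //.
have H1 : [forall k, (k \notin s) ==> (v k == 0)] =
          [forall k, (k \notin j :: s) ==> (v k == 0)] && (v j == 0).
  apply/forallP/andP => [H|[/forallP H vj] k].
    split; last by apply: (implyP (H j)).
    by apply/forallP => k; apply/implyP => ks; apply: (implyP (H k)); move: ks; rewrite in_cons negb_or => /andP [].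
  apply/implyP => ks; case: (eqVneq k j) => [->//|kj].
  by apply: (implyP (H k)); rewrite in_cons negb_or kj.
have H2 : [forall k, (k \notin s) ==> ((v - evec j) k == 0)] =
          [forall k, (k \notin j :: s) ==> (v k == 0)] && (v j == 1).
  have vj : (v - evec j) j = v j + 1 by rewrite !ffunE eqxx F2opp.
  have vk : forall k, k != j -> (v - evec j) k = v k.
    by move=> k kj; rewrite !ffunE (negbTE kj) oppr0 addr0.
  apply/forallP/andP => [H|[/forallP H vj1] k].
    split.
      apply/forallP => k; apply/implyP; rewrite in_cons negb_or => /andP [kj ks].
      by rewrite -vk //; apply: (implyP (H k)).
    have := implyP (H j) js; rewrite vj.
    by case: (F2cases (v j)) => -> //.
  apply/implyP => ks; case: (eqVneq k j) => [->|kj].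
    by rewrite vj (eqP vj1) F2add.
  by rewrite vk //; apply: (implyP (H k)); rewrite in_cons negb_or kj.
rewrite H1 H2; case: [forall k, _]; last by rewrite /= addr0.
by case: (F2cases (v j)) => ->; apply/val_inj.
Qed.

Definition suppW n (i0 : 'I_n) (v : Wsp i0) : {set Jidx i0} := [set j | v j != 0].

Lemma tB_eval n (i0 : 'I_n) (C : {set Jidx i0}) (v : Wsp i0) :
  tB C v = (suppW v \subset C)%:R.
Proof.
rewrite /tB -big_filter tB_seq ?filter_uniq ?index_enum_uniq //; apply: natb_eq.
apply/forallP/subsetP => [H j|H j].
  rewrite inE => vj; have := implyP (H j); rewrite mem_filter mem_index_enum andbT.
  by case: (boolP (j \in C)) => // jC /(_ isT); rewrite (negbTE vj).
apply/implyP; rewrite mem_filter mem_index_enum andbT => jC.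
by apply: contraR (jC) => vj; apply: H; rewrite inE.
Qed.

Definition ind n (i0 : 'I_n) (S : {set Jidx i0}) : Wsp i0 := [ffun j => (j \in S)%:R].

Lemma ind_supp n (i0 : 'I_n) (v : Wsp i0) : ind (suppW v) = v.
Proof. by apply/ffunP => j; rewrite !ffunE inE F2neq0. Qed.

Lemma tcoef_top n (i0 : 'I_n) (a : GA i0) :
  tcoef a [set: Jidx i0] = a [ffun => 1].
Proof.
pose c : {ffun {set Jidx i0} -> 'F_2} :=
  [ffun C : {set Jidx i0} => \sum_(S : {set Jidx i0}) (C \subset S)%:R * a (ind S)].
have Hc : a == \sum_(C : {set Jidx i0}) [ffun w => c C * tB C w].
  apply/eqP/ffunP => v; rewrite sum_ffunE.
  rewrite (eq_bigr (fun C : {set Jidx i0} => \sum_(S : {set Jidx i0}) (C \subset S)%:R * a (ind S) * (suppW v \subset C)%:R)); last first.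
    by move=> C _; rewrite !ffunE tB_eval mulr_suml.
  rewrite exchange_big /=.
  rewrite (eq_bigr (fun S : {set Jidx i0} => a (ind S) * \sum_(C : {set Jidx i0} | C \subset S) (suppW v \subset C)%:R)); last first.
    move=> S _; rewrite mulr_sumr [RHS]big_mkcond /=; apply: eq_bigr => C _.
    by case: (C \subset S); rewrite ?mul1r ?mul0r ?mulr0 // mulrC.
  rewrite (eq_bigr (fun S : {set Jidx i0} => (S == suppW v)%:R * a (ind S))); last first.
    by move=> S _; rewrite parity mulrC eq_sym.
  by rewrite sum_delta ind_supp.
rewrite /tcoef; case: pickP => [c' /eqP Hc'|]; last by move/(_ c); rewrite Hc.
rewrite Hc' sum_ffunE (bigD1 [set: Jidx i0]) //= ffunE tB_eval subsetT mulr1.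
rewrite big1 ?addr0 // => C CT; rewrite ffunE tB_eval.
suff -> : (suppW [ffun=> 1] \subset C) = false by rewrite mulr0.
apply/negP => H; move/negP: CT; apply; apply/eqP/setP => j; rewrite inE.
by apply: (subsetP H); rewrite inE ffunE.
Qed.

Definition Dop n (i0 : 'I_n) (w : Wsp i0) (b : GA i0) : GA i0 :=
  [ffun z : Wsp i0 => b z + b (z + w)].

Lemma sdmulE n (i0 : 'I_n) (p q : GA i0 * Wsp i0) :
  sdmul p q = (p.1 + [ffun v : Wsp i0 => q.1 (v + p.2)], p.2 + q.2).
Proof. by rewrite /sdmul gmul_delta; congr (_ + _, _); apply/ffunP => v; rewrite !ffunE ffopp. Qed.

Lemma Dop0 n (i0 : 'I_n) (b : GA i0) : Dop 0 b = 0.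
Proof. by apply/ffunP => z; rewrite !ffunE addr0 F2add. Qed.

Lemma DopD n (i0 : 'I_n) (w : Wsp i0) (f g : GA i0) : Dop w (f + g) = Dop w f + Dop w g.
Proof.
apply/ffunP => z; rewrite !ffunE.
by rewrite -!addrA; congr (_ + _); rewrite addrCA.
Qed.

Lemma psi_one (G : Type) (mul : G -> G -> G) (one : G) n (i0 : 'I_n)
  (psi : G -> GA i0 * Wsp i0) :
  mul one one = one -> (forall x y, psi (mul x y) = sdmul (psi x) (psi y)) ->
  psi one = (0, 0).
Proof.
move=> H11 hom; have := hom one one; rewrite H11 sdmulE.
case: (psi one) => a w /= [Ea Ew].
have w0 : w = 0 by rewrite -(ffK w w) -Ew ffadd.
have a0 : a = 0.
  apply/ffunP => z; have := congr1 (fun f : GA i0 => f z) Ea.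
  by rewrite !ffunE w0 addr0 F2add.
by rewrite a0 w0.
Qed.

Lemma psi_inv (G : Type) (mul : G -> G -> G) (one : G) (inv : G -> G) n (i0 : 'I_n)
  (psi : G -> GA i0 * Wsp i0) :
  mul one one = one -> (forall x, mul (inv x) x = one) ->
  (forall x y, psi (mul x y) = sdmul (psi x) (psi y)) ->
  forall x, psi (inv x) = ([ffun v : Wsp i0 => (psi x).1 (v + (psi x).2)], (psi x).2).
Proof.
move=> H11 Hinv hom x; have := hom (inv x) x; rewrite Hinv (psi_one H11 hom) sdmulE.
case: (psi (inv x)) => b v; case: (psi x) => a w /= [Eb Ev].
have vw : v = w by rewrite -(ffK v w) -Ev add0r.
subst v; congr pair; apply/ffunP => z.
have := congr1 (fun f : GA i0 => f z) Eb; rewrite !ffunE => E.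
by rewrite -[LHS]addr0 -(F2add (a (z + w))) addrA -E add0r.
Qed.

Lemma psi_comm (G : Type) (mul : G -> G -> G) (one : G) (inv : G -> G) n (i0 : 'I_n)
  (psi : G -> GA i0 * Wsp i0) :
  mul one one = one -> (forall x, mul (inv x) x = one) ->
  (forall x y, psi (mul x y) = sdmul (psi x) (psi y)) ->
  forall x y, psi (gcomm mul inv x y) =
     (Dop (psi y).2 (psi x).1 + Dop (psi x).2 (psi y).1, 0).
Proof.
move=> H11 Hinv hom x y; rewrite /gcomm !hom !(psi_inv H11 Hinv hom).
move: (psi x) (psi y) => [a w] [b v]; rewrite !sdmulE /=.
congr pair; last by rewrite (addrC w v) ffK ffadd.
apply/ffunP => z; rewrite !ffunE.
have e1 : z + (w + v) + w = z + v by rewrite (addrC w v) addrA ffK.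
have e2 : z + (w + v + w) + v = z by rewrite (addrC w v) ffK ffK.
rewrite e1 e2.
by rewrite -!addrA; congr (_ + _); rewrite addrCA; congr (_ + _); rewrite addrC.
Qed.

Definition DiffS n (i0 : 'I_n) (ws : 'I_n -> Wsp i0) (P : {set 'I_n}) (b : GA i0) : GA i0 :=
  [ffun z : Wsp i0 => \sum_(S : {set 'I_n} | S \subset P) b (z + \sum_(s in S) ws s)].

Lemma DiffS0 n (i0 : 'I_n) (ws : 'I_n -> Wsp i0) (b : GA i0) : DiffS ws set0 b = b.
Proof.
apply/ffunP => z; rewrite ffunE (eq_bigl (fun S => S == set0)); last by move=> S; rewrite subset0.
by rewrite big_pred1_eq big_set0 addr0.
Qed.

Lemma D_DiffS n (i0 : 'I_n) (ws : 'I_n -> Wsp i0) (P : {set 'I_n}) (b : GA i0) q :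
  q \notin P -> Dop (ws q) (DiffS ws P b) = DiffS ws (q |: P) b.
Proof.
move=> qP; apply/ffunP => z; rewrite !ffunE sum_powU1 //; congr (_ + _).
apply: eq_bigr => S SP.
have qS : q \notin S by apply/negP => /(subsetP SP); rewrite (negbTE qP).
by rewrite big_setU1 //= addrA.
Qed.

Definition Th n (i0 : 'I_n) (h : {ffun Jidx i0 -> option 'I_n}) : {set 'I_n} :=
  [set s | [exists j, h j == Some s]].

Definition hg n (i0 : 'I_n) (g : 'S_n) : {ffun Jidx i0 -> option 'I_n} :=
  [ffun j => Some (g (val j))].

Lemma Th_hg n (i0 : 'I_n) (g : 'S_n) : Th (hg i0 g) = setT :\ g i0.
Proof.
apply/setP => s; rewrite !inE andbT; apply/existsP/idP => [[j]|sg].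
  rewrite ffunE => /eqP [<-]; apply/negP => /eqP /perm_inj E.
  by have := valP j; rewrite /= E eqxx.
have Hi : (g^-1 s)%g != i0.
  by apply/negP => /eqP E; move/negP: sg; apply; rewrite -E permKV.
by exists (Sub (g^-1 s)%g Hi); rewrite ffunE /= permKV.
Qed.

Lemma exists_g n (i0 : 'I_n) (h : {ffun Jidx i0 -> option 'I_n}) (p : 'I_n) :
  Th h = setT :\ p -> exists g : 'S_n, hg i0 g = h /\ g i0 = p.
Proof.
move=> Eh.
pose f (i : 'I_n) : 'I_n := if insub i is Some j then odflt p (h j) else p.
have fi0 : f i0 = p by rewrite /f insubF // eqxx.
have fj : forall j : Jidx i0, f (val j) = odflt p (h j) by move=> j; rewrite /f valK.
have fsurj : forall s, exists i, f i = s.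
  move=> s; case: (eqVneq s p) => [->|sp]; first by exists i0.
  have : s \in Th h by rewrite Eh !inE sp.
  rewrite inE => /existsP [j /eqP hj]; exists (val j); by rewrite fj hj.
pose r (s : 'I_n) : 'I_n := odflt i0 [pick i | f i == s].
have fr : cancel r f.
  move=> s; rewrite /r; case: pickP => [i /eqP //|H].
  by have [i fi] := fsurj s; have := H i; rewrite fi eqxx.
have [r' rr' r'r] := injF_bij (can_inj fr).
have finj : injective f.
  have fE : forall s, f s = r' s by move=> s; rewrite -{1}(r'r s) fr.
  by move=> x y; rewrite !fE; apply: (can_inj r'r).
exists (perm finj); split; last by rewrite permE.
apply/ffunP => j; rewrite !ffunE permE fj.
case E: (h j) => [s|] //=.
have := fj j; rewrite E /= => Hf.
have E' : val j = i0 := finj _ _ (etrans Hf (esym fi0)).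
by have := valP j; rewrite /= E' eqxx.
Qed.

Lemma inner n (i0 : 'I_n) (d : Jidx i0 -> 'F_2) (p : 'I_n) (ws : 'I_n -> Wsp i0) :
  \sum_(S : {set 'I_n} | S \subset setT :\ p)
      \prod_(j : Jidx i0) (d j + (\sum_(s in S) ws s) j)
  = \sum_(g : 'S_n | g i0 == p) \prod_(j : Jidx i0) ws (g (val j)) j.
Proof.
pose Go (j : Jidx i0) (o : option 'I_n) := if o is Some s then ws s j else d j.
pose okS (S : {set 'I_n}) (o : option 'I_n) := if o is Some s then s \in S else true.
have step1 : forall S : {set 'I_n},
    \prod_(j : Jidx i0) (d j + (\sum_(s in S) ws s) j) =
    \sum_(h : {ffun Jidx i0 -> option 'I_n}) (Th h \subset S)%:R * \prod_j Go j (h j).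
  move=> S.
  rewrite (eq_bigr (fun j => \sum_(o : option 'I_n) (okS S o)%:R * Go j o)); last first.
    move=> j _; rewrite big_opt /= mul1r sum_ffunE big_mkcond /=; congr (_ + _).
    by apply: eq_bigr => s _; case: (s \in S); rewrite ?mul1r ?mul0r.
  rewrite bigA_distr_bigA /=; apply: eq_bigr => h _.
  rewrite big_split /= prod_bool; congr (_ * _); apply: natb_eq.
  apply/forallP/subsetP => [H s|H j].
    by rewrite inE => /existsP [j /eqP hj]; have := H j; rewrite hj.
  by case E: (h j) => [s|] //=; apply: H; rewrite inE; apply/existsP; exists j; rewrite E.
rewrite (eq_bigr _ (fun S _ => step1 S)) exchange_big /=.
rewrite (eq_bigr (fun h => if Th h == setT :\ p then \prod_j Go j (h j) else 0)); last first.
  move=> h _; rewrite -mulr_suml parity.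
  by case: (Th h == setT :\ p); rewrite ?mul1r ?mul0r.
rewrite -big_mkcond /=.
pose ginv (h : {ffun Jidx i0 -> option 'I_n}) : 'S_n :=
  odflt 1%g [pick g : 'S_n | (hg i0 g == h) && (g i0 == p)].
rewrite (reindex_onto (hg i0) ginv) /=; last first.
  move=> h /eqP Eh; rewrite /ginv; case: pickP => [g /andP [/eqP -> _] //|H].
  by have [g [E1 E2]] := exists_g Eh; have := H g; rewrite E1 E2 !eqxx.
apply: eq_big => g.
  rewrite Th_hg; apply/idP/idP.
    move=> /andP [/eqP E _]; have : g i0 \notin setT :\ p by rewrite -E setD11.
    by rewrite !inE andbT negbK.
  move=> /eqP gp; rewrite gp eqxx /=; rewrite /ginv; case: pickP => [g' /andP [/eqP E /eqP g'p]|H]; last first.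
    by have := H g; rewrite gp !eqxx.
  apply/eqP/permP => i; case: (eqVneq i i0) => [->|ii0]; first by rewrite g'p gp.
  have := congr1 (fun f : {ffun Jidx i0 -> option 'I_n} => f (Sub i ii0)) E.
  by rewrite !ffunE /= => [[]].
by move=> _; apply: eq_bigr => j _; rewrite ffunE.
Qed.

Lemma keyL n (i0 : 'I_n) (ws : 'I_n -> Wsp i0) (p : 'I_n) (b : GA i0) (z : Wsp i0) :
  DiffS ws (setT :\ p) b z =
  aug b * \sum_(g : 'S_n | g i0 == p) \prod_(j : Jidx i0) ws (g (val j)) j.
Proof.
rewrite ffunE.
have Hb : forall u : Wsp i0, b (z + u) =
   \sum_(y : Wsp i0) b y * \prod_(j : Jidx i0) ((1 + z j + y j) + u j).
  move=> u; rewrite -[LHS](sum_delta (z + u) b); apply: eq_bigr => y _.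
  rewrite mulrC; congr (_ * _).
  rewrite (eq_bigr (fun j => (y j == (z + u) j)%:R)); last first.
    by move=> j _; rewrite F2eq ffunE; ring.
  rewrite prod_bool; apply: natb_eq; apply/eqP/forallP => [->//|H].
  by apply/ffunP => j; apply/eqP.
rewrite (eq_bigr _ (fun S _ => Hb _)) exchange_big /=.
rewrite /aug mulr_suml; apply: eq_bigr => y _; rewrite -mulr_sumr; congr (_ * _).
exact: (inner (fun j => 1 + z j + y j)).
Qed.

Definition Pset n (m : nat) : {set 'I_n} := [set s : 'I_n | (m <= s)%N].

Lemma Pset_step n' (m : nat) (p : 'I_n'.+2) : (m < n')%N -> (n' <= p)%N ->
  (Pset n'.+2 m :\ p = inord m |: (Pset n'.+2 m.+1 :\ p)) /\
  (inord m \notin Pset n'.+2 m.+1 :\ p).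
Proof.
move=> mn pn; have mn2 : (m < n'.+2)%N by lia.
split; last by rewrite !inE inordK //; lia.
apply/setP => s; rewrite !inE -!val_eqE /= inordK //.
have := ltn_ord s; have := ltn_ord p.
case: (val s == m) / eqP => [->|Hs] _ _.
  have pn' : (n' <= val p)%N := pn.
  have -> : (m != val p) by apply/eqP; lia.
  by rewrite leqnn.
have -> : (m < val s)%N = (m <= val s)%N by rewrite ltn_neqAle; case: eqP => //= E; case: Hs.
by [].
Qed.

Lemma Pset_base n' : (Pset n'.+2 n' :\ inord n' = [set inord n'.+1]).
Proof.
apply/setP => -[s Hs]; rewrite !inE -!val_eqE /= !inordK //.
case E1: (s == n'); case E2: (n' <= s)%N; case E3: (s == n'.+1) => //=; lia.
Qed.

Lemma ncomm_rec (G : Type) (mul : G -> G -> G) (one : G) (inv : G -> G) n' (i0 : 'I_n'.+2)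
  (psi : G -> GA i0 * Wsp i0) (sigma : 'I_n'.+2 -> G) :
  mul one one = one -> (forall x, mul (inv x) x = one) ->
  (forall x y, psi (mul x y) = sdmul (psi x) (psi y)) ->
  forall d, (d <= n')%N ->
  psi (ncomm mul inv one (map (fun k => sigma (inord k)) (iota (n' - d) d.+2))) =
  (DiffS (fun s => (psi (sigma s)).2) (Pset n'.+2 (n' - d) :\ inord n') (psi (sigma (inord n'))).1 +
   DiffS (fun s => (psi (sigma s)).2) (Pset n'.+2 (n' - d) :\ inord n'.+1) (psi (sigma (inord n'.+1))).1, 0).
Proof.
move=> H11 Hinv hom; elim => [_|d IH dn].
  rewrite subn0 /= (psi_comm H11 Hinv hom) Pset_base.
  have -> : Pset n'.+2 n' :\ inord n'.+1 = [set inord n'].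
    apply/setP => -[s Hs]; rewrite !inE -!val_eqE /= !inordK //.
    case E1: (s == n'); case E2: (n' <= s)%N; case E3: (s == n') => //=; lia.
  have HD : forall q (b : GA i0), DiffS (fun s => (psi (sigma s)).2) [set q] b = Dop (psi (sigma q)).2 b.
    by move=> q b; rewrite -(setU0 [set q]) -D_DiffS ?in_set0 // DiffS0.
  by rewrite !HD addrC.
have Em : (n' - d = (n' - d.+1).+1)%N by lia.
have mn : (n' - d.+1 < n')%N by lia.
move: Em mn; set m := (n' - d.+1)%N => Em mn.
rewrite Em in IH.
have -> : ncomm mul inv one [seq sigma (inord k) | k <- iota m d.+3] =
   gcomm mul inv (sigma (inord m)) (ncomm mul inv one [seq sigma (inord k) | k <- iota m.+1 d.+2]) by [].
rewrite (psi_comm H11 Hinv hom) IH; last by lia.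
rewrite /= Dop0 add0r DopD.
have pa : (n' <= @inord n'.+1 n')%N by rewrite inordK.
have pb : (n' <= @inord n'.+1 n'.+1)%N by rewrite inordK.
have [E1 N1] := Pset_step mn pa.
have [E2 N2] := Pset_step mn pb.
by rewrite E1 E2 -!D_DiffS.
Qed.


Lemma prod_sig n (i0 : 'I_n) (F : 'I_n -> 'F_2) :
  \prod_(i | i != i0) F i = \prod_(j : Jidx i0) F (val j).
Proof.
rewrite (reindex_omap (fun j : Jidx i0 => val j) insub) /=.
  by apply: eq_bigl => j; rewrite valK (valP j) eqxx.
by move=> i ii0; rewrite insubT.
Qed.

Unset Implicit Arguments.
From mathcomp Require Import classical_sets topology.
Import GRing.Theory.
Local Open Scope classical_set_scope.
Local Open Scope ring_scope.

Theorem lemma3p22 (G : topologicalType) (mul : G -> G -> G) (one : G)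
    (inv : G -> G) (HG : is_profinite_group mul one inv)
    (n : nat) (chi : 'I_n -> G -> 'F_2) (i0 : 'I_n)
    (Hn : (2 <= n)%N)
    (Hchi : forall i, cont_hom_F2 mul (chi i))
    (Hind : F2_lin_indep chi)
    (psi : G -> GA i0 * Wsp i0) (Hpsi : expansion_map mul chi psi)
    (sigma : 'I_n -> G) :
  phiB psi [set: Jidx i0] (ncomm mul inv one [seq sigma s | s <- enum 'I_n]) =
  \sum_(f : 'S_n | [exists s : 'I_n,
                      ((val s == n.-2) || (val s == n.-1)) && (f s == i0)])
     \prod_(s < n) chi (f s) (sigma s).
Proof.
move: Hn; case: n chi i0 Hchi Hind psi Hpsi sigma => [|[|n']] // chi i0 Hchi Hind psi Hpsi sigma _.
case: HG => [[Hassoc Hone Hinv] _].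
have H11 : mul one one = one := Hone one.
case: Hpsi => hom _ Hw Haug.
have Eseq : [seq sigma s | s <- enum 'I_n'.+2] = [seq sigma (inord k) | k <- iota (n' - n') n'.+2].
  rewrite subnn -val_enum_ord -map_comp; apply: eq_map => s /=; by rewrite inord_val.
rewrite Eseq /phiB (@ncomm_rec _ _ _ _ _ _ _ sigma H11 Hinv hom _ (leqnn n')) /= tcoef_top.
have -> : Pset n'.+2 (n' - n') = [set: 'I_n'.+2]%SET by apply/finset.setP => s; rewrite !finset.inE subnn.
rewrite ffunE !keyL.
have L : forall p : 'I_n'.+2,
   aug (psi (sigma p)).1 * \sum_(g : 'S_n'.+2 | g i0 == p) \prod_(j : Jidx i0) (psi (sigma (g (val j)))).2 j
   = \sum_(g : 'S_n'.+2 | g i0 == p) \prod_(i < n'.+2) chi i (sigma (g i)).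
  move=> p; rewrite mulr_sumr; apply: eq_bigr => g /eqP gp.
  rewrite (bigD1 i0) //= prod_sig Haug gp; congr (_ * _); apply: eq_bigr => j _.
  by rewrite Hw.
rewrite !L.
have R : \sum_(f : 'S_n'.+2 | [exists s : 'I_n'.+2, ((val s == n'.+2.-2) || (val s == n'.+2.-1)) && (f s == i0)])
     \prod_(s < n'.+2) chi (f s) (sigma s) =
   \sum_(g : 'S_n'.+2 | (g i0 == inord n') || (g i0 == inord n'.+1)) \prod_(i < n'.+2) chi i (sigma (g i)).
  rewrite (reindex_inj (@invg_inj _)); apply: eq_big => g.
    apply/existsP/orP => [[s /andP [Hs /eqP E]]| H].
      have Es : g i0 = s by rewrite -E permKV.
      rewrite Es; case/orP: Hs => /eqP Hs; [left|right]; apply/eqP/val_inj; rewrite /= inordK // Hs.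
    exists (g i0); rewrite permK eqxx andbT.
    by case: H => /eqP ->; rewrite /= inordK // eqxx ?orbT.
  move=> _; rewrite (reindex_inj (@perm_inj _ g)); apply: eq_bigr => i _.
  by rewrite permK.
rewrite R [RHS](bigID (fun g : 'S_n'.+2 => g i0 == inord n')) /=; congr (_ + _); apply: eq_bigl => g.
  by case: (g i0 == inord n'); rewrite ?andbF.
case E: (g i0 == inord n'); rewrite /= ?andbT ?andbF //.
move/eqP: E => ->; apply/negbTE/negP => /eqP /(congr1 val).
rewrite /= !inordK //; lia.
Qed.
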